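(* Let $\Lambda=\{(V_i,\Lambda_i,v_i)\}_{i\in I}$ and $\Lambda'=\{(V_i',\Lambda_i',v_i')\}_{i\in I}$ be g-fusion Bessel sequences in $H$ (with respect to $\{H_i\}_{i\in I}$) with bounds $B$ and $D$, respectively, and let $\Gamma=\{(W_j,\Gamma_j,w_j)\}_{j\in J}$ and $\Gamma'=\{(W_j',\Gamma_j',w_j')\}_{j\in J}$ be g-fusion Bessel sequences in $K$ (with respect to $\{K_j\}_{j\in J}$) with bounds $E$ and $F$, respectively. Suppose their synthesis operators satisfy $T_{\Lambda'}T_\Lambda^*=I_H$ and $T_{\Gamma'}T_\Gamma^*=I_K$. Then $\Lambda\otimes\Gamma=\{(V_i\otimes W_j,\Lambda_i\otimes\Gamma_j,v_iw_j)\}_{i,j}$ and $\Lambda'\otimes\Gamma'=\{(V_i'\otimes W_j',\Lambda_i'\otimes\Gamma_j',v_i'w_j')\}_{i,j}$ are g-fusion frames for $H\otimes K$.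
   Context: $H,K$ separable Hilbert spaces, $I,J\subseteq\mathbb{Z}$, $\{H_i\}$, $\{K_j\}$ Hilbert spaces; $V_i,V_i'\subseteq H$, $W_j,W_j'\subseteq K$ closed subspaces; $\Lambda_i,\Lambda_i'\in\mathcal{B}(H,H_i)$, $\Gamma_j,\Gamma_j'\in\mathcal{B}(K,K_j)$; all weights positive. $P_V$ is the orthogonal projection onto $V$. A family $\{(V_i,\Lambda_i,v_i)\}$ is a g-fusion Bessel sequence in $H$ with bound $B$ if $\sum_iv_i^2\|\Lambda_iP_{V_i}f\|^2\le B\|f\|^2$ for all $f\in H$; it is a g-fusion frame if additionally $A\|f\|^2\le\sum_iv_i^2\|\Lambda_iP_{V_i}f\|^2$ for some $A>0$. Its synthesis operator is $T_\Lambda:l^2(\{H_i\})\to H$, $T_\Lambda(\{f_i\})=\sum_iv_iP_{V_i}\Lambda_i^*f_i$, where $l^2(\{H_i\})=\{\{f_i\}:f_i\in H_i,\sum\|f_i\|^2<\infty\}$, with adjoint $T_\Lambda^*f=\{v_i\Lambda_iP_{V_i}f\}_i$. $H\otimes K$ is the Hilbert tensor product ($\langle f\otimes g,f'\otimes g'\rangle=\langle f,f'\rangle\langle g,g'\rangle$, $\|f\otimes g\|=\|f\|\|g\|$); $Q\otimes T$ is the bounded operator with $(Q\otimes T)(f\otimes g)=Qf\otimes Tg$; $P_{V\otimes W}=P_V\otimes P_W$. A family $\{(V_i\otimes W_j,\Lambda_i\otimes\Gamma_j,v_iw_j)\}_{i,j}$ is a g-fusion frame for $H\otimes K$ (w.r.t.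 $\{H_i\otimes K_j\}$) if there exist $0<A\le B<\infty$ with $A\|f\otimes g\|^2\le\sum_{i,j}v_i^2w_j^2\|(\Lambda_i\otimes\Gamma_j)P_{V_i\otimes W_j}(f\otimes g)\|^2\le B\|f\otimes g\|^2$ for all $f\in H,g\in K$. *)

(* Defs.v *)
From HB Require Import structures.
From mathcomp Require Import all_boot all_order all_algebra.
From mathcomp Require Import all_classical all_reals.
From mathcomp Require Import ereal esum.
From mathcomp Require Import complex.
Set Implicit Arguments. Unset Strict Implicit. Unset Printing Implicit Defensive.
Import Order.TTheory GRing.Theory Num.Theory.
Local Open Scope ring_scope.
Local Open Scope classical_set_scope.

Section Defs.
Variable R : realType.
Local Notation C := (R[i]).

Definition sq_norm_of (V : lmodType C) (ip : V -> V -> C) (x : V) : R :=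
  Num.sqrt (complex.Re (ip x x)).

Record hilbert := Hilbert {
  hspace :> lmodType C;
  hinner : hspace -> hspace -> C;
  hinnerDl : forall (a : C) (x y z : hspace),
      hinner (a *: x + y) z = a * hinner x z + hinner y z;
  hinnerC : forall x y : hspace, hinner y x = (hinner x y)^*;
  hinner_ge0 : forall x : hspace, 0 <= hinner x x;
  hinner_eq0 : forall x : hspace, hinner x x = 0 -> x = 0;
  hcomplete : forall u : nat -> hspace,
      (forall eps : R, 0 < eps -> exists N : nat, forall m n : nat,
          (N <= m)%N -> (N <= n)%N -> sq_norm_of hinner (u m - u n) < eps) ->
      exists l : hspace, forall eps : R, 0 < eps -> exists N : nat,
          forall n : nat, (N <= n)%N -> sq_norm_of hinner (u n - l) < eps
}.

Definition hnorm (H : hilbert) (x : H) : R := sq_norm_of (@hinner H) x.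

Definition hseparable (H : hilbert) : Prop :=
  exists e : nat -> H, forall (x : H) (eps : R), 0 < eps ->
    exists n : nat, hnorm (x - e n) < eps.

Definition closed_subspace (H : hilbert) (V : set H) : Prop :=
  [/\ V 0,
      (forall (a : C) (x y : H), V x -> V y -> V (a *: x + y)) &
      (forall x : H, (forall eps : R, 0 < eps -> exists y : H, V y /\ hnorm (x - y) < eps) -> V x)].

Definition is_orth_proj (H : hilbert) (V : set H) (P : H -> H) : Prop :=
  forall x : H, V (P x) /\ (forall y : H, V y -> hinner (x - P x) y = 0).

Definition bounded_op (H H' : hilbert) (T : H -> H') : Prop :=
  (forall (a : C) (x y : H), T (a *: x + y) = a *: T x + T y) /\
  exists M : R, forall x : H, hnorm (T x) <= M * hnorm x.

Definition is_adjoint (H H' : hilbert) (T : H -> H') (Ts : H' -> H) : Prop :=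
  forall (x : H) (y : H'), hinner (T x) y = hinner x (Ts y).

Definition gf_system (H : hilbert) (I : set int) (Hs : int -> hilbert)
  (V : int -> set H) (P : int -> H -> H) (L : forall i : int, H -> Hs i)
  (v : int -> R) : Prop :=
  forall i : int, I i ->
    [/\ closed_subspace (V i), is_orth_proj (V i) (P i), bounded_op (L i) & 0 < v i].

Definition gf_bessel (H : hilbert) (I : set int) (Hs : int -> hilbert)
  (V : int -> set H) (P : int -> H -> H) (L : forall i : int, H -> Hs i)
  (v : int -> R) (B : R) : Prop :=
  gf_system I V P L v /\
  forall f : H,
    (\esum_(i in I) ((v i) ^+ 2 * (hnorm (L i (P i f))) ^+ 2)%:E <= (B * (hnorm f) ^+ 2)%:E)%E.

(* (unconditional) convergence of sum_{i in I} u i to s in H *)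
Definition has_sum (H : hilbert) (I : set int) (u : int -> H) (s : H) : Prop :=
  forall eps : R, 0 < eps ->
    exists F0 : seq int, (forall i, i \in F0 -> I i) /\
      forall F : seq int, uniq F -> (forall i, i \in F -> I i) ->
        {subset F0 <= F} -> hnorm (\sum_(i <- F) u i - s) < eps.

(* T_{Lambda'} T_Lambda^* = I_H, where T_Lambda^* f = {v_i Lambda_i P_{V_i} f}_i
   and T_{Lambda'} {f_i} = sum_i v'_i P_{V'_i} Lambda'_i^* f_i
   (Ls' i is the adjoint Lambda'_i^* of Lambda'_i) *)
Definition synth_analysis_id (H : hilbert) (I : set int) (Hs : int -> hilbert)
  (P : int -> H -> H) (L : forall i : int, H -> Hs i) (v : int -> R)
  (P' : int -> H -> H) (Ls' : forall i : int, Hs i -> H) (v' : int -> R) : Prop :=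
  forall f : H,
    has_sum I (fun i => (v' i)%:C%C *: P' i (Ls' i ((v i)%:C%C *: L i (P i f)))) f.

(* A Hilbert tensor product of H and K: a Hilbert space with a bilinear map
   (f, g) |-> f (x) g preserving inner products, whose range spans a dense
   subspace. *)
Record tensor_model (H K : hilbert) := TensorModel {
  tm_space : hilbert;
  tm_tens : H -> K -> tm_space;
  tm_linl : forall (a : C) (f f' : H) (g : K),
      tm_tens (a *: f + f') g = a *: tm_tens f g + tm_tens f' g;
  tm_linr : forall (a : C) (f : H) (g g' : K),
      tm_tens f (a *: g + g') = a *: tm_tens f g + tm_tens f g';
  tm_inner : forall (f f' : H) (g g' : K),
      hinner (tm_tens f g) (tm_tens f' g') = hinner f f' * hinner g g';
  tm_dense : forall (z : tm_space) (eps : R), 0 < eps ->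
      exists s : seq (H * K), hnorm (z - \sum_(p <- s) tm_tens p.1 p.2) < eps
}.

(* {(V_i (x) W_j, Lambda_i (x) Gamma_j, v_i w_j)}_{i,j} is a g-fusion frame for
   H (x) K w.r.t. {H_i (x) K_j}; here
   (Lambda_i (x) Gamma_j) P_{V_i (x) W_j} (f (x) g)
     = (Lambda_i (x) Gamma_j) (P_{V_i} f (x) P_{W_j} g)
     = Lambda_i P_{V_i} f (x) Gamma_j P_{W_j} g. *)
Definition gf_tensor_frame (H K : hilbert) (I J : set int)
  (Hs Ks : int -> hilbert) (TM : tensor_model H K)
  (TMs : forall i j : int, tensor_model (Hs i) (Ks j))
  (P : int -> H -> H) (L : forall i : int, H -> Hs i) (v : int -> R)
  (Q : int -> K -> K) (G : forall j : int, K -> Ks j) (w : int -> R) : Prop :=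
  exists A B : R, 0 < A /\ A <= B /\
    forall (f : H) (g : K),
      let S := (\esum_(k in I `*` J)
                 ((v k.1 * w k.2) ^+ 2 *
                  (hnorm (tm_tens (TMs k.1 k.2) (L k.1 (P k.1 f)) (G k.2 (Q k.2 g)))) ^+ 2)%:E)%E in
      ((A * (hnorm (tm_tens TM f g)) ^+ 2)%:E <= S)%E /\
      (S <= (B * (hnorm (tm_tens TM f g)) ^+ 2)%:E)%E.
End Defs.

(* Main.v *)
Require Import Defs.
From HB Require Import structures.
From mathcomp Require Import all_boot all_order all_algebra.
From mathcomp Require Import all_classical all_reals.
From mathcomp Require Import ereal esum.
From mathcomp Require Import complex.
From mathcomp Require Import ring lra.
Import Order.TTheory GRing.Theory Num.Theory.
Local Open Scope ring_scope.
Local Open Scope classical_set_scope.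



Section Basics.
Context {R : realType}.
Context {H : hilbert R}.
Local Notation C := (R[i]).

Definition rip (x y : H) : R := complex.Re (hinner x y).

Lemma ReD (a b : C) : complex.Re (a + b) = complex.Re a + complex.Re b.
Proof. by case: a => ? ?; case: b. Qed.

Lemma ReRM (r : R) (b : C) : complex.Re (r%:C%C * b) = r * complex.Re b.
Proof. by case: b => ? ? /=; rewrite mul0r subr0. Qed.

Lemma ReJ (a : C) : complex.Re (a^*)%C = complex.Re a.
Proof. by case: a. Qed.

Lemma hinner0l (z : H) : hinner 0 z = 0.
Proof.
have := hinnerDl 1 0 0 z; rewrite scaler0 addr0 mul1r => /eqP.
by rewrite -{1}[hinner 0 z]addr0 => /eqP /addrI.
Qed.

Lemma CN1 : (-1 : C) = ((-1:R)%:C)%C.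
Proof. by rewrite rmorphN1. Qed.

Lemma C1 : (1 : C) = ((1:R)%:C)%C.
Proof. by rewrite rmorph1. Qed.

Lemma rip_scaleD (a : R) (x y z : H) : rip (a%:C%C *: x + y) z = a * rip x z + rip y z.
Proof. by rewrite /rip hinnerDl ReD ReRM. Qed.

Lemma ripC (x y : H) : rip x y = rip y x.
Proof. by rewrite /rip hinnerC ReJ. Qed.

Lemma rip0l (z : H) : rip 0 z = 0.
Proof. by rewrite /rip hinner0l. Qed.

Lemma rip_scale (a : R) (x z : H) : rip (a%:C%C *: x) z = a * rip x z.
Proof. by rewrite -[a%:C%C *: x]addr0 rip_scaleD rip0l addr0. Qed.

Lemma ripD (x y z : H) : rip (x + y) z = rip x z + rip y z.
Proof. by rewrite -[x in LHS]scale1r C1 rip_scaleD mul1r. Qed.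

Lemma ripN (x z : H) : rip (- x) z = - rip x z.
Proof. by rewrite -scaleN1r CN1 rip_scale mulN1r. Qed.

Lemma ripB (x y z : H) : rip (x - y) z = rip x z - rip y z.
Proof. by rewrite ripD ripN. Qed.

Lemma rip_scaler (a : R) (x z : H) : rip z (a%:C%C *: x) = a * rip z x.
Proof. by rewrite ripC rip_scale ripC. Qed.

Lemma rip_scaleDr (a : R) (x y z : H) : rip z (a%:C%C *: x + y) = a * rip z x + rip z y.
Proof. by rewrite ripC rip_scaleD ![rip _ z]ripC. Qed.

Lemma ripDr (x y z : H) : rip z (x + y) = rip z x + rip z y.
Proof. by rewrite ripC ripD ![rip _ z]ripC. Qed.

Lemma ripBr (x y z : H) : rip z (x - y) = rip z x - rip z y.
Proof. by rewrite ripC ripB ![rip _ z]ripC. Qed.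

Lemma hinner_real (x : H) : hinner x x = (rip x x)%:C%C.
Proof.
have := hinner_ge0 x; rewrite lecE /= => /andP[/eqP h _].
by move: h; rewrite /rip; case: (hinner x x) => a b /= ->.
Qed.

Lemma rip_ge0 (x : H) : 0 <= rip x x.
Proof. by have := hinner_ge0 x; rewrite lecE => /andP[]. Qed.

Lemma rip_eq0 (x : H) : rip x x = 0 -> x = 0.
Proof. by move=> h; apply: hinner_eq0; rewrite hinner_real h. Qed.

Lemma hnorm_ge0 (x : H) : 0 <= hnorm x.
Proof. exact: sqrtr_ge0. Qed.

Lemma hnorm_sq (x : H) : hnorm x ^+ 2 = rip x x.
Proof. by rewrite /hnorm /sq_norm_of sqr_sqrtr // rip_ge0. Qed.

Lemma hnorm_eq0 (x : H) : hnorm x = 0 -> x = 0.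
Proof. by move=> h; apply: rip_eq0; rewrite -hnorm_sq h expr0n. Qed.

Lemma hnormN (x : H) : hnorm (- x) = hnorm x.
Proof. by rewrite /hnorm /sq_norm_of -/(rip _ _) ripN -scaleN1r CN1 rip_scaler -/(rip _ _) mulN1r opprK. Qed.

Lemma hnorm_swap (x y : H) : hnorm (x - y) = hnorm (y - x).
Proof. by rewrite -hnormN opprB. Qed.

Lemma CS (x y : H) : rip x y <= hnorm x * hnorm y.
Proof.
set a := hnorm x; set b := hnorm y.
have ha : 0 <= a by exact: hnorm_ge0.
have hb : 0 <= b by exact: hnorm_ge0.
have := rip_ge0 (b%:C%C *: x + (- a)%:C%C *: y).
rewrite rip_scaleD !rip_scaleDr !rip_scale !rip_scaler.
rewrite -!hnorm_sq -/a -/b => h.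
have [ab0|] := eqVneq (a * b) 0.
  move/eqP: (ab0); rewrite mulf_eq0 => /orP[] /eqP h0.
    by rewrite (@hnorm_eq0 x h0) rip0l ab0.
  by rewrite (@hnorm_eq0 y h0) ripC rip0l ab0.
move=> abn0.
have abp : 0 < a * b by rewrite lt0r abn0 mulr_ge0.
move: h; rewrite (ripC y x) => h.
idtac.
rewrite -subr_ge0 -(pmulr_rge0 _ abp); nra.
Qed.

Lemma proj_sym (V : set H) (P : H -> H) : is_orth_proj V P ->
  forall x y, rip (P x) y = rip x (P y).
Proof.
move=> hP x y.
have [Vx hx] := hP x; have [Vy hy] := hP y.
have e1 : rip (x - P x) (P y) = 0 by rewrite /rip hx.
have e2 : rip (y - P y) (P x) = 0 by rewrite /rip hy.
rewrite ripB in e1; rewrite ripB in e2.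
rewrite ripC; rewrite (ripC (P y) (P x)) in e2; lra.
Qed.

Lemma rip_sum (F : seq int) (u : int -> H) (z : H) :
  rip (\sum_(i <- F) u i) z = \sum_(i <- F) rip (u i) z.
Proof.
elim: F => [|a F IH]; first by rewrite !big_nil rip0l.
by rewrite !big_cons ripD IH.
Qed.

End Basics.



Lemma hnorm_tens (R : realType) (H K : hilbert R) (TM : tensor_model H K) f g :
  hnorm (tm_tens TM f g) = hnorm f * hnorm g.
Proof.
rewrite /hnorm /sq_norm_of tm_inner !hinner_real.
rewrite -rmorphM /= -sqrtrM //; exact: rip_ge0.
Qed.

Lemma esumZ (R : realType) (T : choiceType) (I : set T) (r : R) (f : T -> \bar R) :
  (0 <= r) -> (forall i, (0 <= f i)%E) ->
  (\esum_(i in I) (r%:E * f i) = r%:E * \esum_(i in I) f i)%E.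
Proof.
move=> r0 f0; rewrite /esum -ereal_supZl //; last first.
  by apply/set0P; exists 0%E; exists set0; [exact: fsets_set0|rewrite fsbig_set0].
rewrite image_comp; congr ereal_sup; apply: eq_imagel => A _ /=.
by rewrite ge0_mule_fsumr.
Qed.

Lemma esum_fin (R : realType) (e : \bar R) (x : R) :
  (0 <= e)%E -> (e <= x%:E)%E -> e = (fine e)%:E.
Proof. by case: e. Qed.

Lemma fin_le_esum (R : realType) (I : set int) (a : int -> R) (F : seq int) :
  uniq F -> (forall i, i \in F -> I i) ->
  ((\sum_(i <- F) a i)%:E <= \esum_(i in I) (a i)%:E)%E.
Proof.
move=> uF FI; apply: esum_ge; exists [set` F].
  split; first exact: finite_seq. 
  by move=> i /= /FI.
by rewrite -sumEFin fsbig_seq.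
Qed.



Lemma lowerC (R : realType) (I : set int) (x y : int -> R) (N S1 c : R) :
  0 <= N ->
  (forall e, 0 < e -> exists F, [/\ uniq F, (forall i, i \in F -> I i) &
      N <= \sum_(i <- F) x i * y i + e]) ->
  (forall F, uniq F -> (forall i, i \in F -> I i) -> \sum_(i <- F) x i ^+ 2 <= S1) ->
  (forall F, uniq F -> (forall i, i \in F -> I i) -> \sum_(i <- F) y i ^+ 2 <= c * N) ->
  N <= (`|c| + 1) * S1.
Proof.
move=> N0 hyp hx hy.
set Dp := `|c| + 1.
have Dp0 : 0 < Dp by rewrite /Dp ltr_wpDl.
have cD : c <= Dp by rewrite /Dp; have := ler_norm c; lra.
have cN : c * N / Dp <= N by rewrite ler_pdivrMr //; nra.
apply/ler_addgt0Pr => e e0.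
have [F [uF FI hN]] := hyp (e / 2) ltac:(by rewrite divr_gt0).
have h1 : \sum_(i <- F) x i * y i <= \sum_(i <- F) (Dp * x i ^+ 2 + y i ^+ 2 / Dp) / 2.
  apply: ler_sum => i _.
  have -> : (Dp * x i ^+ 2 + y i ^+ 2 / Dp) / 2 = x i * y i + (Dp * x i - y i) ^+ 2 / (2 * Dp).
    by field; rewrite gt_eqF.
  by rewrite lerDl divr_ge0 // ?sqr_ge0 // mulr_ge0 // ltW.
have h2 : \sum_(i <- F) (Dp * x i ^+ 2 + y i ^+ 2 / Dp) / 2 =
   (Dp * \sum_(i <- F) x i ^+ 2 + (\sum_(i <- F) y i ^+ 2) / Dp) / 2.
  by rewrite -mulr_suml big_split /= -mulr_sumr -mulr_suml.
have h3 := hx F uF FI.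
have h4 := hy F uF FI.
have h5 : (\sum_(i <- F) y i ^+ 2) / Dp <= c * N / Dp by rewrite ler_pM2r // invr_gt0.
have h6 : Dp * \sum_(i <- F) x i ^+ 2 <= Dp * S1 by rewrite ler_pM2l.
lra.
Qed.



Lemma lowerB (R : realType) (H : hilbert R) (I : set int) (Hs : int -> hilbert R)
  (V' : int -> set H) (P P' : int -> H -> H)
  (L L' : forall i : int, H -> Hs i) (Ls' : forall i : int, Hs i -> H)
  (v v' : int -> R) (f : H) :
  (forall i, I i -> is_orth_proj (V' i) (P' i)) ->
  (forall i, I i -> 0 <= v i) -> (forall i, I i -> 0 <= v' i) ->
  (forall i, I i -> is_adjoint (L' i) (Ls' i)) ->
  has_sum I (fun i => (v' i)%:C%C *: P' i (Ls' i ((v i)%:C%C *: L i (P i f)))) f ->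
  forall e, 0 < e -> exists F, [/\ uniq F, (forall i, i \in F -> I i) &
    hnorm f ^+ 2 <= \sum_(i <- F) (v i * hnorm (L i (P i f))) *
                                  (v' i * hnorm (L' i (P' i f))) + e].
Proof.
move=> hP hv hv' hadj hs e e0.
have nf0 := hnorm_ge0 f.
set eps := e / (hnorm f + 1).
have eps0 : 0 < eps by rewrite divr_gt0 // ltr_wpDl.
have epsf : eps * hnorm f <= e.
  rewrite /eps mulrAC ler_pdivrMr ?ltr_wpDl //; nra.
have [F0 [F0I hF]] := hs eps eps0.
have FI : forall i, i \in undup F0 -> I i by move=> i; rewrite mem_undup => /F0I.
exists (undup F0); split => //; first exact: undup_uniq.
have hn := hF (undup F0) (undup_uniq _) FI ltac:(by move=> i; rewrite mem_undup).
set s := \sum_(i <- undup F0) _ in hn.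
have key : rip s f <= \sum_(i <- undup F0) (v i * hnorm (L i (P i f))) *
                                  (v' i * hnorm (L' i (P' i f))).
  rewrite /s rip_sum big_seq [leRHS]big_seq; apply: ler_sum => i /FI Ii.
  rewrite rip_scale (proj_sym _ _ (hP i Ii)) ripC /rip -hadj // -/(rip _ _) rip_scaler.
  have := CS (L' i (P' i f)) (L i (P i f)).
  have := hv i Ii; have := hv' i Ii.
  have := hnorm_ge0 (L' i (P' i f)); have := hnorm_ge0 (L i (P i f)).
  move=> _ _ a b cs; have := ler_wpM2l (mulr_ge0 a b) cs; lra.
have h1 : rip (f - s) f <= hnorm (f - s) * hnorm f by exact: CS.
have h2 : hnorm (f - s) = hnorm (s - f).
  exact: hnorm_swap.
rewrite ripB in h1.
have h3 : hnorm (s - f) * hnorm f <= eps * hnorm f by rewrite ler_wpM2r // ltW.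
rewrite h2 in h1; rewrite hnorm_sq; lra.
Qed.



Arguments esum_fin {R e x}.
Arguments fin_le_esum {R I} a {F}.

Lemma bessel_real (R : realType) (H : hilbert R) (I : set int) (Hs : int -> hilbert R)
  (V : int -> set H) (P : int -> H -> H) (L : forall i : int, H -> Hs i)
  (v : int -> R) (B : R) (hL : gf_bessel I V P L v B) (f : H) :
  exists s, [/\ (\esum_(i in I) ((v i) ^+ 2 * (hnorm (L i (P i f))) ^+ 2)%:E = s%:E)%E,
     0 <= s, s <= B * hnorm f ^+ 2 &
     forall F, uniq F -> (forall i, i \in F -> I i) ->
       \sum_(i <- F) (v i * hnorm (L i (P i f))) ^+ 2 <= s].
Proof.
set e := (\esum_(i in I) _)%E.
have e0 : (0 <= e)%E by apply: esum_ge0 => i _; rewrite lee_fin mulr_ge0 // sqr_ge0.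
have eB := hL.2 f.
have ee := esum_fin e0 eB.
exists (fine e); split.
- exact: ee.
- by move: e0; rewrite ee lee_fin.
- by move: eB; rewrite -/e ee lee_fin.
- move=> F uF FI; have := fin_le_esum (fun i => (v i) ^+ 2 * (hnorm (L i (P i f))) ^+ 2) uF FI.
  rewrite -/e ee lee_fin.
  by under [in X in _ -> X]eq_bigr do rewrite exprMn.
Qed.



Definition frame_hyp {R : realType} {H : hilbert R} (I : set int) {Hs : int -> hilbert R}
  (P : int -> H -> H) (L : forall i : int, H -> Hs i) (v : int -> R) (c d : R) :=
  forall f : H, exists s, [/\ (\esum_(i in I) ((v i) ^+ 2 * (hnorm (L i (P i f))) ^+ 2)%:E = s%:E)%E,
     0 <= s, hnorm f ^+ 2 <= c * s & s <= d * hnorm f ^+ 2].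

Lemma space_bounds (R : realType) (H : hilbert R) (I : set int) (Hs : int -> hilbert R)
  (V V' : int -> set H) (P P' : int -> H -> H)
  (L L' : forall i : int, H -> Hs i) (Ls' : forall i : int, Hs i -> H)
  (v v' : int -> R) (B D : R)
  (hL : gf_bessel I V P L v B) (hL' : gf_bessel I V' P' L' v' D)
  (adjL' : forall i : int, I i -> is_adjoint (L' i) (Ls' i))
  (idH : synth_analysis_id I P L v P' Ls' v') :
  frame_hyp I P L v (`|D| + 1) B /\ frame_hyp I P' L' v' (`|B| + 1) D.
Proof.
have hP i : I i -> is_orth_proj (V' i) (P' i) by move=> Ii; have [] := hL'.1 i Ii.
have hv i : I i -> 0 <= v i by move=> Ii; have [_ _ _ /ltW] := hL.1 i Ii.
have hv' i : I i -> 0 <= v' i by move=> Ii; have [_ _ _ /ltW] := hL'.1 i Ii.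
have low f := @lowerB R H I Hs V' P P' L L' Ls' v v' f hP hv hv' adjL' (idH f).
split => f.
- have [s [es s0 sB sF]] := @bessel_real _ _ _ _ _ _ _ _ _ hL f.
  have [s' [es' s0' sB' sF']] := @bessel_real _ _ _ _ _ _ _ _ _ hL' f.
  exists s; split => //.
  apply: (@lowerC _ I (fun i => v i * hnorm (L i (P i f)))
                 (fun i => v' i * hnorm (L' i (P' i f)))) => //.
  + exact: sqr_ge0.
  + exact: low.
  + by move=> F uF FI; exact: le_trans (sF' F uF FI) sB'.
- have [s [es s0 sB sF]] := @bessel_real _ _ _ _ _ _ _ _ _ hL f.
  have [s' [es' s0' sB' sF']] := @bessel_real _ _ _ _ _ _ _ _ _ hL' f.
  exists s'; split => //.
  apply: (@lowerC _ I (fun i => v' i * hnorm (L' i (P' i f)))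
                 (fun i => v i * hnorm (L i (P i f)))) => //.
  + exact: sqr_ge0.
  + move=> e e0; have [F [uF FI hF]] := low f e e0; exists F; split => //.
    by under eq_bigr do rewrite mulrC.
  + by move=> F uF FI; exact: le_trans (sF F uF FI) sB.
Qed.



Lemma tensor_gen (R : realType) (H K : hilbert R) (I J : set int)
  (Hs Ks : int -> hilbert R) (TM : tensor_model H K)
  (TMs : forall i j : int, tensor_model (Hs i) (Ks j))
  (P : int -> H -> H) (L : forall i : int, H -> Hs i) (v : int -> R)
  (Q : int -> K -> K) (G : forall j : int, K -> Ks j) (w : int -> R)
  (c1 c2 d1 d2 : R) :
  0 < c1 -> 0 < c2 -> frame_hyp I P L v c1 d1 -> frame_hyp J Q G w c2 d2 ->
  gf_tensor_frame I J TM TMs P L v Q G w.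
Proof.
move=> c10 c20 hf hg.
have A0 : 0 < (c1 * c2)^-1 by rewrite invr_gt0 mulr_gt0.
exists (c1 * c2)^-1, ((c1 * c2)^-1 + `|d1| * `|d2|); split => //; split.
  by rewrite lerDl mulr_ge0.
move=> f g /=.
have [s1 [e1 s10 l1 u1]] := hf f.
have [s2 [e2 s20 l2 u2]] := hg g.
have -> : (\esum_(k in I `*` J) ((v k.1 * w k.2) ^+ 2 *
    hnorm (tm_tens (TMs k.1 k.2) (L k.1 (P k.1 f)) (G k.2 (Q k.2 g))) ^+ 2)%:E)%E
    = (s1 * s2)%:E.
  under eq_esum do rewrite hnorm_tens exprMn exprMn mulrACA EFinM.
  rewrite -(esum_esum (I := I) (J := fun _ => J)
     (a := fun i j => ((v i ^+ 2 * hnorm (L i (P i f)) ^+ 2)%:E *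
                 (w j ^+ 2 * hnorm (G j (Q j g)) ^+ 2)%:E)%E)); last first.
    by move=> i j _ _; apply: mule_ge0; rewrite lee_fin mulr_ge0 // sqr_ge0.
  have inner : forall i, (\esum_(j in J) ((v i ^+ 2 * hnorm (L i (P i f)) ^+ 2)%:E *
                 (w j ^+ 2 * hnorm (G j (Q j g)) ^+ 2)%:E) =
       s2%:E * (v i ^+ 2 * hnorm (L i (P i f)) ^+ 2)%:E)%E.
    move=> i; rewrite esumZ.
    - by rewrite e2 muleC.
    - by rewrite mulr_ge0 // sqr_ge0.
    - by move=> j; rewrite lee_fin mulr_ge0 // sqr_ge0.
  under eq_esum => i _ do rewrite inner.
  rewrite esumZ.
  - by rewrite e1 -EFinM mulrC.
  - by [].
  - by move=> i; rewrite lee_fin mulr_ge0 // sqr_ge0.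
rewrite hnorm_tens !lee_fin.
set Nf := hnorm f ^+ 2 in l1 u1; set Ng := hnorm g ^+ 2 in l2 u2.
have Nf0 : 0 <= Nf by exact: sqr_ge0.
have Ng0 : 0 <= Ng by exact: sqr_ge0.
rewrite exprMn -/Nf -/Ng.
split.
- have h : Nf * Ng <= (c1 * s1) * (c2 * s2) by rewrite ler_pM.
  have -> : s1 * s2 = (c1 * c2)^-1 * ((c1 * s1) * (c2 * s2)).
    by field; rewrite !gt_eqF.
  by rewrite ler_wpM2l // ltW.
- have h1 : s1 * s2 <= (d1 * Nf) * (d2 * Ng) by rewrite ler_pM.
  have h2 : (d1 * Nf) * (d2 * Ng) <= (`|d1| * Nf) * (`|d2| * Ng).
    rewrite ler_pM // ?(le_trans s10 u1) ?(le_trans s20 u2) //.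
      by rewrite ler_wpM2r // ler_norm.
    by rewrite ler_wpM2r // ler_norm.
  have h3 : 0 <= (c1 * c2)^-1 * (Nf * Ng) by apply: mulr_ge0; [exact: ltW | exact: mulr_ge0].
  nra.
Qed.

Theorem theorem3p10 (R : realType) (H K : hilbert R)
  (sepH : hseparable H) (sepK : hseparable K)
  (I J : set int) (Hs Ks : int -> hilbert R)
  (* Lambda and Lambda' in H *)
  (V V' : int -> set H) (P P' : int -> H -> H)
  (L L' : forall i : int, H -> Hs i) (Ls' : forall i : int, Hs i -> H)
  (v v' : int -> R) (B D : R)
  (* Gamma and Gamma' in K *)
  (W W' : int -> set K) (Q Q' : int -> K -> K)
  (G G' : forall j : int, K -> Ks j) (Gs' : forall j : int, Ks j -> K)
  (w w' : int -> R) (E F : R)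
  (hL : gf_bessel I V P L v B) (hL' : gf_bessel I V' P' L' v' D)
  (hG : gf_bessel J W Q G w E) (hG' : gf_bessel J W' Q' G' w' F)
  (adjL' : forall i : int, I i -> is_adjoint (L' i) (Ls' i))
  (adjG' : forall j : int, J j -> is_adjoint (G' j) (Gs' j))
  (idH : synth_analysis_id I P L v P' Ls' v')
  (idK : synth_analysis_id J Q G w Q' Gs' w')
  (TM : tensor_model H K) (TMs : forall i j : int, tensor_model (Hs i) (Ks j)) :
  gf_tensor_frame I J TM TMs P L v Q G w /\
  gf_tensor_frame I J TM TMs P' L' v' Q' G' w'.
Proof.
have [h1 h1'] := @space_bounds _ _ _ _ _ _ _ _ _ _ _ _ _ _ _ hL hL' adjL' idH.
have [h2 h2'] := @space_bounds _ _ _ _ _ _ _ _ _ _ _ _ _ _ _ hG hG' adjG' idK.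
have p (x : R) : 0 < `|x| + 1 by rewrite ltr_wpDl.
split.
- exact: (@tensor_gen _ _ _ _ _ _ _ TM TMs _ _ _ _ _ _ (`|D| + 1) (`|F| + 1) _ _ (p D) (p F) h1 h2).
- exact: (@tensor_gen _ _ _ _ _ _ _ TM TMs _ _ _ _ _ _ (`|B| + 1) (`|E| + 1) _ _ (p B) (p E) h1' h2').
Qed.
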